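(* Consider the two-layer multi-item order fulfillment problem described in the context with a single FDC ($K=1$), fixed costs $f_0\ge f_1\ge 0$, and variable costs satisfying $a\le c_{k,t}^i\le b$ for constants $b>a>0$. For parameters $\eta\ge1$, $\theta\ge0$, let \textsc{Order-Size AdjV-Priority} be the following policy. In each period $t$, for each item $i$, set $\hat m_{1,t}^i=\min\{S_t^i,I_{1,t-1}^i\}$ if $c_{1,t}^i<c_{0,t}^i/\eta$ and $\hat m_{1,t}^i=0$ otherwise, and $\hat m_{0,t}^i=S_t^i-\hat m_{1,t}^i$. If $\sum_{i=1}^nS_t^i\le\theta$ and $I_{1,t-1}^i\ge S_t^i$ for all $i\in[n]$, fulfill the whole order from the FDC ($m_{1,t}^i=S_t^i$, $m_{0,t}^i=0$); otherwise set $m_{k,t}^i=\hat m_{k,t}^i$. If $\eta=\sqrt{\max\{f_0/2,\,b\}/a}$ and $\theta=\frac{f_0}{2a\eta}$, then \[\mathfrak R(\textsc{Order-Size AdjV-Priority})\le(4+\sqrt2)\sqrt{\frac{\max\{f_0/2,\ b\}}{a}}.\]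
   Context: Problem with one FDC (index $1$) and one RDC (index $0$, unlimited inventory). The FDC initially holds $I_{1,0}^i\ge0$ units of item $i\in[n]$, never replenished. In periods $t=1,\dots,T$ an order $\boldsymbol S_t=(S_t^i)_i$ of nonnegative integers arrives; after observing it and the variable costs $c_{k,t}^i$, the policy must immediately and irrevocably choose $m_{0,t}^i,m_{1,t}^i\ge0$ with $m_{0,t}^i+m_{1,t}^i=S_t^i$ and $m_{1,t}^i\le I_{1,t-1}^i$, where $I_{1,t}^i=I_{1,0}^i-\sum_{\tau\le t}m_{1,\tau}^i$. Period cost $\sum_{k=0,1}[f_k\mathbb{I}(\sum_im_{k,t}^i>0)+\sum_ic_{k,t}^im_{k,t}^i]$; total cost is the sum over periods. Online policies decide in period $t$ using only fixed costs, initial inventories and orders/variable costs up to $t$ (and the known constants $a,b$). $\mathrm{ALG}(I)$: (expected) total cost; $\mathrm{OPT}(I)$: offline optimal total cost. $\mathfrak R(\mathrm{ALG})$ is the supremum of $\mathrm{ALG}(I)/\mathrm{OPT}(I)$ over all $n,T$, initial inventories, variable costs in $[a,b]$ and order sequences. *)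

(* Defs.v *)
From HB Require Import structures.
From mathcomp Require Import all_boot all_order all_algebra.
From mathcomp Require Import reals.
Set Implicit Arguments. Unset Strict Implicit. Unset Printing Implicit Defensive.
Import Order.TTheory GRing.Theory Num.Theory.
Local Open Scope ring_scope.

(* Periods are t = 0, ..., T-1 (paper's t = 1..T shifted by one).  A fulfillment plan is a pair (m0, m1) of functions
   nat -> 'I_n -> nat: m0 t i units of item i shipped from the RDC (index 0),
   m1 t i units shipped from the FDC (index 1) in period t. *)

Section Model.
Variables (R : realType) (n : nat).

Definition period_cost (f0 f1 : R) (c0 c1 : nat -> 'I_n -> R)
    (m0 m1 : nat -> 'I_n -> nat) (t : nat) : R :=
  (if (0 < \sum_(i < n) m0 t i)%N then f0 else 0)
  + \sum_(i < n) c0 t i * (m0 t i)%:R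
  + ((if (0 < \sum_(i < n) m1 t i)%N then f1 else 0)
  + \sum_(i < n) c1 t i * (m1 t i)%:R).

Definition total_cost (T : nat) (f0 f1 : R) (c0 c1 : nat -> 'I_n -> R)
    (m0 m1 : nat -> 'I_n -> nat) : R :=
  \sum_(t < T) period_cost f0 f1 c0 c1 m0 m1 t.

(* feasibility: every order is fully served, and the FDC never ships more
   than its remaining inventory I_{1,t-1} = I0 - sum_{s<t} m1 s, i.e.
   cumulative FDC shipments never exceed the initial inventory. *)
Definition feasible (T : nat) (I0 : 'I_n -> nat) (Sd : nat -> 'I_n -> nat)
    (m0 m1 : nat -> 'I_n -> nat) : Prop :=
  forall t i, (t < T)%N ->
    (m0 t i + m1 t i = Sd t i)%N /\ (\sum_(s < t.+1) m1 s i <= I0 i)%N.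

Definition offline_optimal (T : nat) (f0 f1 : R) (c0 c1 : nat -> 'I_n -> R)
    (I0 : 'I_n -> nat) (Sd : nat -> 'I_n -> nat) (m0 m1 : nat -> 'I_n -> nat)
    : Prop :=
  feasible T I0 Sd m0 m1 /\
  forall m0' m1', feasible T I0 Sd m0' m1' ->
    total_cost T f0 f1 c0 c1 m0 m1 <= total_cost T f0 f1 c0 c1 m0' m1'.

(* Order-Size AdjV-Priority: FDC shipment in period t given the current
   FDC inventory inv = I_{1,t-1}. *)
Definition osadjv_m1 (eta theta : R) (c0 c1 : nat -> 'I_n -> R)
    (Sd : nat -> 'I_n -> nat) (t : nat) (inv : 'I_n -> nat) (i : 'I_n) : nat :=
  if ((\sum_(j < n) Sd t j)%:R <= theta) && [forall j, (Sd t j <= inv j)%N]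
  then Sd t i
  else if c1 t i < c0 t i / eta then minn (Sd t i) (inv i) else 0%N.

(* FDC inventory at the start of period t under the policy (I_{1,t-1}) *)
Fixpoint osadjv_inv (eta theta : R) (c0 c1 : nat -> 'I_n -> R)
    (Sd : nat -> 'I_n -> nat) (I0 : 'I_n -> nat) (t : nat) : 'I_n -> nat :=
  match t with
  | 0 => I0
  | t'.+1 => fun i =>
      (osadjv_inv eta theta c0 c1 Sd I0 t' i
       - osadjv_m1 eta theta c0 c1 Sd t' (osadjv_inv eta theta c0 c1 Sd I0 t') i)%N
  end.

Definition alg_m1 (eta theta : R) (c0 c1 : nat -> 'I_n -> R)
    (Sd : nat -> 'I_n -> nat) (I0 : 'I_n -> nat) (t : nat) (i : 'I_n) : nat :=
  osadjv_m1 eta theta c0 c1 Sd t (osadjv_inv eta theta c0 c1 Sd I0 t) i.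

Definition alg_m0 (eta theta : R) (c0 c1 : nat -> 'I_n -> R)
    (Sd : nat -> 'I_n -> nat) (I0 : 'I_n -> nat) (t : nat) (i : 'I_n) : nat :=
  (Sd t i - alg_m1 eta theta c0 c1 Sd I0 t i)%N.

Definition alg_cost (eta theta : R) (T : nat) (f0 f1 : R)
    (c0 c1 : nat -> 'I_n -> R) (I0 : 'I_n -> nat) (Sd : nat -> 'I_n -> nat) : R :=
  total_cost T f0 f1 c0 c1 (alg_m0 eta theta c0 c1 Sd I0)
    (alg_m1 eta theta c0 c1 Sd I0).

End Model.

(* Main.v *)
Require Import Defs.
From HB Require Import structures.
From mathcomp Require Import all_boot all_order all_algebra.
From mathcomp Require Import reals.
From mathcomp Require Import ring lra zify.
Import Order.TTheory GRing.Theory Num.Theory.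
Local Open Scope ring_scope.
Lemma item_hat (R : realType) (a b eta c0 c1 K : R) (S inv y0 y1 P : nat) :
  0 < a -> 1 <= eta -> K <= 3 * (eta ^+ 2 * a) -> a <= c0 <= b -> a <= c1 <= b ->
  (y0 + y1 = S)%N -> (y1 <= P + inv)%N ->
  forall x : nat, x = (if c1 < c0 / eta then minn S inv else 0%N) ->
  c0 * (S - x)%:R + c1 * x%:R + K * (x - y1)%:R <=
  (1 + 3 * eta) * (c0 * y0%:R) + (1 + eta) * (c1 * y1%:R) + b * (minn P (y1 - x))%:R.
Proof.
move=> a0 e1 HK /andP[ca0 c0b] /andP[ca1 c1b] hS hP x ->.
have e0 : 0 < eta by apply: lt_le_trans e1.
have hSR : S%:R = y0%:R + y1%:R :> R by rewrite -hS natrD.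
have hy0 : 0 <= y0%:R :> R by [].
have hy1 : 0 <= y1%:R :> R by [].
case: ifP => hc.
- have hc' : eta * c1 < c0 by rewrite ltr_pdivlMr // mulrC in hc.
  have hxS : (minn S inv <= S)%N by apply: geq_minl.
  case: (leqP y1 (minn S inv)) => hxy.
  + have hW : 0 <= (minn P (y1 - minn S inv))%:R :> R by [].
    rewrite !natrB // hSR.
    have hX : y1%:R <= (minn S inv)%:R :> R by rewrite ler_nat.
    have hXS : (minn S inv)%:R <= y0%:R + y1%:R :> R by rewrite -hSR ler_nat.
    move: hW hX hXS; set X := (minn S inv)%:R => hW hX hXS.
    have hc01 : c1 <= c0 by nra.
    have h1 : 0 <= (c0 - c1) * (X - y1%:R) by apply: mulr_ge0; lra.
    have h2 : eta * (eta * a) <= eta * c0 by nra.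
    have hd : 0 <= X - y1%:R by lra.
    have h3a : K * (X - y1%:R) <= 3 * (eta ^+ 2 * a) * (X - y1%:R) by rewrite ler_wpM2r.
    have h3b : 3 * (eta ^+ 2 * a) <= 3 * eta * c0 by rewrite expr2; nra.
    have h3c : 3 * (eta ^+ 2 * a) * (X - y1%:R) <= 3 * eta * c0 * (X - y1%:R) by rewrite ler_wpM2r.
    have h3 : K * (X - y1%:R) <= 3 * eta * c0 * (X - y1%:R) by lra.
    have h4 : 3 * eta * c0 * (X - y1%:R) <= 3 * eta * c0 * y0%:R.
      by rewrite ler_wpM2l //; [apply: mulr_ge0; lra | lra].
    have h5 : 0 <= eta * (c1 * y1%:R) by apply: mulr_ge0; [lra | apply: mulr_ge0; lra].
    have h6 : 0 <= b * (minn P (y1 - minn S inv))%:R by apply: mulr_ge0; lra.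
    have h7 : c0 * (y0%:R + y1%:R - X) + c1 * X = c0 * y0%:R + c1 * y1%:R - (c0 - c1) * (X - y1%:R) by ring.
    rewrite h7; lra.
  + have hiS : (inv < S)%N.
      have : (minn S inv < S)%N by apply: leq_trans hxy _; rewrite -hS leq_addl.
      by rewrite gtn_min ltnn.
    have -> : minn S inv = inv by apply/minn_idPr; apply: ltnW.
    have hi1 : (inv <= y1)%N by move: hxy hiS; clear; lia.
    have -> : (inv - y1 = 0)%N by move: hi1; clear; lia.
    have -> : minn P (y1 - inv) = (y1 - inv)%N by apply/minn_idPr; move: hP; clear; lia.
    rewrite !natrB // ?(ltnW hiS) // hSR.
    have hI : (inv%:R <= y1%:R :> R) by rewrite ler_nat.
    have hI0 : 0 <= inv%:R :> R by [].
    have g1 : c0 * (y1%:R - inv%:R) <= b * (y1%:R - inv%:R) by rewrite ler_wpM2r //; lra.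
    have g2 : c1 * inv%:R <= c1 * y1%:R by rewrite ler_wpM2l //; lra.
    have g3 : 0 <= eta * (c1 * y1%:R) by apply: mulr_ge0; [lra | apply: mulr_ge0; lra].
    have g4 : 0 <= eta * (c0 * y0%:R) by apply: mulr_ge0; [lra | apply: mulr_ge0; lra].
    have g5 : c0 * (y0%:R + y1%:R - inv%:R) = c0 * y0%:R + c0 * (y1%:R - inv%:R) by ring.
    rewrite g5 mulr0; lra.
- have hc' : c0 <= eta * c1.
    by move/negbT: hc; rewrite -leNgt ler_pdivrMr // mulrC.
  rewrite subn0 sub0n mulr0 addr0 mulr0 addr0 hSR.
  have hW : 0 <= (minn P y1)%:R :> R by [].
  have g1 : c0 * y1%:R <= eta * c1 * y1%:R by rewrite ler_wpM2r.
  have g4 : 0 <= eta * (c0 * y0%:R) by apply: mulr_ge0; [lra | apply: mulr_ge0; lra].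
  have g3 : 0 <= c1 * y1%:R by apply: mulr_ge0; lra.
  have g6 : 0 <= b * (minn P y1)%:R by apply: mulr_ge0; lra.
  have g5 : c0 * (y0%:R + y1%:R) = c0 * y0%:R + c0 * y1%:R by ring.
  rewrite g5 subn0; lra.
Qed.

Lemma sum_ge0_mul (R : realType) (n : nat) (a : R) (c : 'I_n -> R) (y : 'I_n -> nat) :
  0 <= a -> (forall i, a <= c i) -> 0 <= \sum_(i < n) c i * (y i)%:R.
Proof.
move=> a0 hc; apply: sumr_ge0 => i _; apply: mulr_ge0 => //.
exact: le_trans a0 (hc i).
Qed.

Lemma period_bound (R : realType) (n : nat) (f0 f1 a b eta theta : R)
  (c0 c1 : 'I_n -> R) (S inv y0 y1 P x : 'I_n -> nat) :
  0 <= f1 -> f1 <= f0 -> 0 < a -> a <= b -> 1 <= eta -> b <= eta ^+ 2 * a ->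
  f0 <= 2 * (eta ^+ 2 * a) ->
  2 * a * eta * theta = f0 -> theta <= eta -> 2 * b * theta <= eta * f0 -> 0 <= theta ->
  (forall i, a <= c0 i <= b /\ a <= c1 i <= b) ->
  (forall i, y0 i + y1 i = S i)%N ->
  (forall i, y1 i <= P i + inv i)%N ->
  (forall i, x i = if ((\sum_(j < n) S j)%:R <= theta) && [forall j, (S j <= inv j)%N]
     then S i else if c1 i < c0 i / eta then minn (S i) (inv i) else 0%N) ->
  (if (0 < \sum_(i < n) (S i - x i))%N then f0 else 0) + \sum_(i < n) c0 i * (S i - x i)%:R
  + ((if (0 < \sum_(i < n) x i)%N then f1 else 0) + \sum_(i < n) c1 i * (x i)%:R)
  + (b + f0) * \sum_(i < n) (x i - y1 i)%:R
  <= (1 + 3 * eta) * ((if (0 < \sum_(i < n) y0 i)%N then f0 else 0)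
       + \sum_(i < n) c0 i * (y0 i)%:R
       + ((if (0 < \sum_(i < n) y1 i)%N then f1 else 0) + \sum_(i < n) c1 i * (y1 i)%:R))
     + (b + f0) * \sum_(i < n) (minn (P i) (y1 i - x i))%:R.
Proof.
move=> f10 f01 a0 ab e1 hb hf0 ht1 ht2 ht3 ht0 hc hS hP hx.
have e0 : 0 < eta by apply: lt_le_trans e1.
have f00 : 0 <= f0 by apply: le_trans f01.
have hc0a i : a <= c0 i by case: (hc i) => /andP[].
have hc0b i : c0 i <= b by case: (hc i) => /andP[].
have hc1a i : a <= c1 i by case: (hc i) => _ /andP[].
have hc1b i : c1 i <= b by case: (hc i) => _ /andP[].
have b0 : 0 <= b by lra.
set F0y := (if (0 < \sum_(i < n) y0 i)%N then f0 else 0).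
set F1y := (if (0 < \sum_(i < n) y1 i)%N then f1 else 0).
set A0 := \sum_(i < n) c0 i * (y0 i)%:R.
set A1 := \sum_(i < n) c1 i * (y1 i)%:R.
set W := \sum_(i < n) (minn (P i) (y1 i - x i))%:R.
have A00 : 0 <= A0 by apply: (@sum_ge0_mul _ _ a) => //; apply: ltW.
have A10 : 0 <= A1 by apply: (@sum_ge0_mul _ _ a) => //; apply: ltW.
have W0 : 0 <= W by apply: sumr_ge0.
have F0y0 : 0 <= F0y by rewrite /F0y; case: ifP.
have F1y0 : 0 <= F1y by rewrite /F1y; case: ifP.
have hSsum : (\sum_(i < n) S i = \sum_(i < n) y0 i + \sum_(i < n) y1 i)%N.
  by rewrite -big_split; apply: eq_bigr => i _; rewrite -hS.
have OFf1 : (0 < \sum_(i < n) S i)%N -> f1 <= F0y + F1y.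
  rewrite hSsum /F0y /F1y addn_gt0; case/orP => [->|->].
    by case: ifP => _; rewrite ?addr0 ?ler_wpDr.
  by rewrite lerDr; case: ifP.
have pe1 : 0 <= (eta - 1) * (F0y + F1y) by apply: mulr_ge0; lra.
have pe2 : 0 <= (eta - 1) * A0 by apply: mulr_ge0; lra.
have pe3 : 0 <= (eta - 1) * A1 by apply: mulr_ge0; lra.
have pe4 : 0 <= eta * F0y by apply: mulr_ge0; lra.
have pe5 : 0 <= eta * F1y by apply: mulr_ge0; lra.
have pe6 : 0 <= eta * A0 by apply: mulr_ge0; lra.
have pe7 : 0 <= eta * A1 by apply: mulr_ge0; lra.
have pe8 : 0 <= f0 * W by apply: mulr_ge0.
have pe9 : 0 <= b * W by apply: mulr_ge0.
have hxS : forall i, (x i <= S i)%N.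
  move=> i.
  rewrite hx; case: ifP => // _; case: ifP => _; [exact: geq_minl | exact: leq0n].
case hB : (_ && _) in hx.
-
  have e1' : (\sum_(i < n) (S i - x i) = 0)%N by apply: big1 => i _; rewrite hx subnn.
  have e2 : \sum_(i < n) c0 i * (S i - x i)%:R = 0 by apply: big1 => i _; rewrite hx subnn mulr0.
  have e3 : (\sum_(i < n) x i = \sum_(i < n) S i)%N by apply: eq_bigr => i _; rewrite hx.
  have e4 : \sum_(i < n) c1 i * (x i)%:R = A1 + \sum_(i < n) c1 i * (y0 i)%:R.
    rewrite /A1 -big_split; apply: eq_bigr => i _; rewrite hx -hS natrD /=; ring.
  have e5 : \sum_(i < n) (x i - y1 i)%:R = (\sum_(i < n) y0 i)%:R :> R.
    by rewrite natr_sum; apply: eq_bigr => i _; rewrite hx -hS addnK.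
  have e6 : \sum_(i < n) c1 i * (y0 i)%:R <= b * (\sum_(i < n) y0 i)%:R.
    rewrite natr_sum mulr_sumr; apply: ler_sum => j _; apply: ler_wpM2r => //.
  have hY0 : 0 <= (\sum_(i < n) y0 i)%:R :> R by [].
  have hYt : (\sum_(i < n) y0 i)%:R <= theta.
    move/andP: hB => [hB _]; apply: le_trans hB; rewrite ler_nat hSsum; exact: leq_addr.
  rewrite e1' e2 e3 e4 e5 /= addr0 add0r.
  move: hY0 hYt e6; set Y := (\sum_(i < n) y0 i)%:R => hY0 hYt e6.
  case hy0 : (0 < \sum_(i < n) y0 i)%N.
  + have g1 : f0 * Y <= f0 * theta by apply: ler_wpM2l.
    have g2 : b * Y <= b * theta by apply: ler_wpM2l.
    have g3 : f0 * theta <= f0 * eta by apply: ler_wpM2l.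
    have hF0 : F0y = f0 by rewrite /F0y hy0.
    have g4 : (if (0 < \sum_(i < n) S i)%N then f1 else 0) <= f0 by case: ifP.
    rewrite hF0 in pe4 *.
    have s1 : (b + f0) * Y = b * Y + f0 * Y by ring.
    rewrite s1; clearbody Y F1y A0 A1 W.
    have s2 : (1 + 3 * eta) * (f0 + A0 + (F1y + A1)) = f0 + A0 + F1y + A1 + 3 * (eta * f0) + 3 * (eta * A0) + 3 * (eta * F1y) + 3 * (eta * A1) by ring.
    have s3 : (b + f0) * W = b * W + f0 * W by ring.
    rewrite s2 s3. move: ht3; rewrite -mulrA => ht3. have s4 : f0 * eta = eta * f0 by rewrite mulrC.
    have d1 : \sum_(i < n) c1 i * (y0 i)%:R <= b * theta by lra.
    have d2 : b * Y + f0 * Y <= eta * f0 + f0 * theta by lra.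
    have d3 : f0 * theta <= eta * f0 by lra.
    set G := (X in X + (A1 + _) + _ <= _). have g4p : G <= f0 by rewrite /G; case: ifP. clearbody G. lra.
  + have hY : Y = 0 by rewrite /Y; move/negbT: hy0; rewrite -eqn0Ngt => /eqP ->.
    have hF0 : F0y = 0 by rewrite /F0y hy0.
    set G := (X in X + (A1 + _) + _ <= _).
    have hF1 : F1y = G.
      by rewrite /F1y /G hSsum; move/negbT: hy0; rewrite -eqn0Ngt => /eqP ->.
    rewrite hY mulr0 in e6; rewrite hY hF0 -hF1 mulr0 addr0 add0r.
    clearbody Y F1y A0 A1 W G.
    have s2 : (1 + 3 * eta) * (A0 + (F1y + A1)) = A0 + F1y + A1 + 3 * (eta * A0) + 3 * (eta * F1y) + 3 * (eta * A1) by ring.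
    have s3 : (b + f0) * W = b * W + f0 * W by ring.
    rewrite s2 s3; lra.
-
  have K3 : b + f0 <= 3 * (eta ^+ 2 * a) by lra.
  have hitem : forall i, c0 i * (S i - x i)%:R + c1 i * (x i)%:R + (b + f0) * (x i - y1 i)%:R
      <= (1 + 3 * eta) * (c0 i * (y0 i)%:R) + (1 + eta) * (c1 i * (y1 i)%:R)
         + b * (minn (P i) (y1 i - x i))%:R.
    move=> i; case: (hc i) => h0 h1.
    exact: (@item_hat R a b eta (c0 i) (c1 i) (b + f0) (S i) (inv i) (y0 i) (y1 i) (P i) a0 e1 K3 h0 h1 (hS i) (hP i) (x i) (hx i)).
  have hsum : \sum_(i < n) c0 i * (S i - x i)%:R + \sum_(i < n) c1 i * (x i)%:R
      + (b + f0) * \sum_(i < n) (x i - y1 i)%:R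
      <= (1 + 3 * eta) * A0 + (1 + eta) * A1 + b * W.
    rewrite /A0 /A1 /W !mulr_sumr -!big_split /=; apply: ler_sum => i _; exact: hitem.
  have hxinv : forall i, (x i <= inv i)%N.
    by move=> i; rewrite hx; case: ifP => _; [exact: geq_minr | exact: leq0n].
  set G0 := (X in X + _ + _ + _ <= _).
  set G1 := (X in _ + _ + (X + _) + _ <= _).
  have hG1 : G1 <= F0y + F1y.
    rewrite /G1; case: ifP => h; last by lra.
    apply: OFf1; apply: leq_trans h _; apply: leq_sum => i _; exact: hxS.
  have hG0 : G0 <= F0y + F1y + 2 * (eta * A1) + f0 * W.
    rewrite /G0; case: ifP => _; last by lra.
    case hy0 : (0 < \sum_(i < n) y0 i)%N.
      have hF0 : F0y = f0 by rewrite /F0y hy0.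
      lra.
    have hy0i : forall i, y0 i = 0%N.
      move/negbT: hy0; rewrite -eqn0Ngt sum_nat_eq0 => /forallP H i.
      by move: (H i) => /eqP.
    have hy1i : forall i, y1 i = S i by move=> i; rewrite -hS hy0i.
    case: (ltrP theta (\sum_(i < n) S i)%:R) => ht.
    + have q1 : a * (\sum_(i < n) S i)%:R <= A1.
        rewrite natr_sum mulr_sumr /A1; apply: ler_sum => i _; rewrite hy1i.
        by apply: ler_wpM2r.
      have q2 : theta * (2 * a * eta) <= (\sum_(i < n) S i)%:R * (2 * a * eta).
        by apply: ler_wpM2r => //; [apply: mulr_ge0; lra | apply: ltW].
      have q3 : eta * (a * (\sum_(i < n) S i)%:R) <= eta * A1 by apply: ler_wpM2l; lra.
      have q4 : (\sum_(i < n) S i)%:R * (2 * a * eta) = 2 * (eta * (a * (\sum_(i < n) S i)%:R)) by ring.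
      have q5 : theta * (2 * a * eta) = f0 by rewrite -ht1; ring.
      lra.
    + have [j hj] : exists j, ~~ (S j <= inv j)%N.
        by apply/forallPn; move/negbT: hB; rewrite negb_and ht.
      have hWj : (1 <= minn (P j) (y1 j - x j))%N.
        move: hj (hxinv j) (hP j) (hy1i j); clear; lia.
      have hW1 : 1 <= W.
        rewrite /W -natr_sum ler1n; apply: leq_trans hWj _.
        by rewrite (bigD1 j) //= leq_addr.
      have : 0 <= f0 * (W - 1) by apply: mulr_ge0; lra.
      rewrite mulrBr mulr1; lra.
  clearbody G0 G1 F0y F1y A0 A1 W.
  have s2 : (1 + 3 * eta) * (F0y + A0 + (F1y + A1)) = F0y + A0 + F1y + A1 + 3 * (eta * F0y) + 3 * (eta * A0) + 3 * (eta * F1y) + 3 * (eta * A1) by ring.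
  have s3 : (b + f0) * W = b * W + f0 * W by ring.
  have s4 : (1 + 3 * eta) * A0 + (1 + eta) * A1 + b * W = A0 + 3 * (eta * A0) + A1 + eta * A1 + b * W by ring.
  have s5 : (eta - 1) * (F0y + F1y) = eta * F0y + eta * F1y - F0y - F1y by ring.
  rewrite s4 in hsum; rewrite s5 in pe1; rewrite s2 s3.
  lra.
Qed.

Lemma m1_le_inv (R : realType) (n : nat) (eta theta : R) c0 c1 Sd t (inv : 'I_n -> nat) i :
  (osadjv_m1 eta theta c0 c1 Sd t inv i <= inv i)%N.
Proof.
rewrite /osadjv_m1; case: ifP => [/andP[_ /forallP H] | _]; first exact: H.
by case: ifP => _; [exact: geq_minr | exact: leq0n].
Qed.

Lemma inv_eq (R : realType) (n : nat) (eta theta : R) c0 c1 Sd (I0 : 'I_n -> nat) t i :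
  (osadjv_inv eta theta c0 c1 Sd I0 t i
   + \sum_(s < t) alg_m1 eta theta c0 c1 Sd I0 s i = I0 i)%N.
Proof.
elim: t => [|t IH]; first by rewrite big_ord0 addn0.
rewrite big_ord_recr /= /alg_m1.
have := @m1_le_inv R n eta theta c0 c1 Sd t (osadjv_inv eta theta c0 c1 Sd I0 t) i.
move: IH; rewrite /alg_m1.
set u := osadjv_inv _ _ _ _ _ _ _ i.
set m := osadjv_m1 _ _ _ _ _ _ _ i.
set s := \sum_(_ < _) _.
clearbody u m s; lia.
Qed.

Lemma potential (T : nat) (x y : nat -> nat) :
  ((\sum_(s < T) x s - \sum_(s < T) y s)
   + \sum_(t < T) minn (\sum_(s < t) x s - \sum_(s < t) y s) (y t - x t)
   <= \sum_(t < T) (x t - y t))%N.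
Proof.
elim: T => [|T IH]; first by rewrite !big_ord0.
rewrite !big_ord_recr /=.
move: IH.
set A := (\sum_(s < T) x s)%N. set B := (\sum_(s < T) y s)%N.
set w := (\sum_(t < T) minn _ _)%N. set v := (\sum_(t < T) (x t - y t))%N.
clearbody A B w v; lia.
Qed.

Theorem theorem6 (R : realType) (f0 f1 a b : R) :
  0 <= f1 -> f1 <= f0 -> 0 < a -> a < b ->
  let eta := Num.sqrt (Num.max (f0 / 2) b / a) in
  let theta := f0 / (2 * a * eta) in
  forall (n T : nat) (I0 : 'I_n -> nat) (c0 c1 : nat -> 'I_n -> R)
         (Sd : nat -> 'I_n -> nat),
  (forall t i, (t < T)%N ->
     a <= c0 t i <= b /\ a <= c1 t i <= b) ->
  forall (m0 m1 : nat -> 'I_n -> nat),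
  offline_optimal T f0 f1 c0 c1 I0 Sd m0 m1 ->
  alg_cost eta theta T f0 f1 c0 c1 I0 Sd
    <= (4 + Num.sqrt 2) * Num.sqrt (Num.max (f0 / 2) b / a)
       * total_cost T f0 f1 c0 c1 m0 m1.
Proof.
move=> f10 f01 a0 ab eta theta n T I0 c0 c1 Sd hc m0 m1 [hfeas _].
have f00 : 0 <= f0 by apply: le_trans f01.
set M := Num.max (f0 / 2) b.
have hMb : b <= M by rewrite /M le_max lexx orbT.
have hMf : f0 / 2 <= M by rewrite /M le_max lexx.
have hMa : 0 <= M / a by apply: divr_ge0; lra.
have e0 : 0 <= eta by apply: sqrtr_ge0.
have e2 : eta ^+ 2 = M / a by rewrite sqr_sqrtr.
have e2a : eta ^+ 2 * a = M by rewrite e2 mulfVK //; lra.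
have e1 : 1 <= eta.
  have : a < eta ^+ 2 * a by lra.
  rewrite -{1}(mul1r a) ltr_pM2r // => h.
  rewrite leNgt; apply/negP => h'; move: h; rewrite expr2; nra.
have hb : b <= eta ^+ 2 * a by lra.
have hf0 : f0 <= 2 * (eta ^+ 2 * a) by lra.
have den0 : 0 < 2 * a * eta by apply: mulr_gt0; [lra | lra].
have ht1 : 2 * a * eta * theta = f0 by rewrite /theta mulrC divfK //; apply: lt0r_neq0.
have ht2 : theta <= eta.
  rewrite /theta ler_pdivrMr //; rewrite expr2 in hf0; nra.
have ht3 : 2 * b * theta <= eta * f0.
  rewrite /theta mulrA ler_pdivrMr //.
  have : b * f0 <= eta ^+ 2 * a * f0 by apply: ler_wpM2r.
  rewrite expr2; nra.
have ht0 : 0 <= theta by apply: divr_ge0 => //; apply: ltW.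
set x := alg_m1 eta theta c0 c1 Sd I0.
set Phi := fun t i => (\sum_(s < t) x s i - \sum_(s < t) m1 s i)%N.
set K := b + f0.
have hper : forall t, (t < T)%N ->
  period_cost f0 f1 c0 c1 (alg_m0 eta theta c0 c1 Sd I0) x t
    + K * \sum_(i < n) (x t i - m1 t i)%:R
  <= (1 + 3 * eta) * period_cost f0 f1 c0 c1 m0 m1 t
    + K * \sum_(i < n) (minn (Phi t i) (m1 t i - x t i))%:R.
  move=> t tT.
  have hS : forall i, (m0 t i + m1 t i = Sd t i)%N by move=> i; case: (hfeas t i tT).
  have hP : forall i, (m1 t i <= Phi t i + osadjv_inv eta theta c0 c1 Sd I0 t i)%N.
    move=> i; case: (hfeas t i tT) => _; rewrite big_ord_recr /=.
    have := @inv_eq R n eta theta c0 c1 Sd I0 t i.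
    rewrite /Phi /x.
    set u := osadjv_inv _ _ _ _ _ _ _ i.
    set p := (\sum_(s < t) alg_m1 _ _ _ _ _ _ s i)%N.
    set q := (\sum_(s < t) m1 s i)%N.
    clearbody u p q; move=> h1 h2; move: h1 h2; clear; lia.
  have := @period_bound R n f0 f1 a b eta theta (c0 t) (c1 t) (Sd t)
    (osadjv_inv eta theta c0 c1 Sd I0 t) (m0 t) (m1 t) (Phi t) (x t)
    f10 f01 a0 (ltW ab) e1 hb hf0 ht1 ht2 ht3 ht0 (fun i => hc t i tT) hS hP (fun i => erefl).
  by [].
have hsum : alg_cost eta theta T f0 f1 c0 c1 I0 Sd
    + K * \sum_(t < T) \sum_(i < n) (x t i - m1 t i)%:R
  <= (1 + 3 * eta) * total_cost T f0 f1 c0 c1 m0 m1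
    + K * \sum_(t < T) \sum_(i < n) (minn (Phi t i) (m1 t i - x t i))%:R.
  rewrite /alg_cost /total_cost !mulr_sumr -!big_split /=.
  apply: ler_sum => t _; exact: hper t (ltn_ord t).
have hWV : (\sum_(t < T) \sum_(i < n) minn (Phi t i) (m1 t i - x t i)
    <= \sum_(t < T) \sum_(i < n) (x t i - m1 t i))%N.
  rewrite [X in (X <= _)%N]exchange_big [X in (_ <= X)%N]exchange_big /=.
  apply: leq_sum => i _.
  apply: leq_trans (potential T (fun t => x t i) (fun t => m1 t i)).
  exact: leq_addl.
have hWVR : \sum_(t < T) \sum_(i < n) (minn (Phi t i) (m1 t i - x t i))%:R
    <= \sum_(t < T) \sum_(i < n) (x t i - m1 t i)%:R :> R.
  have : (\sum_(t < T) \sum_(i < n) minn (Phi t i) (m1 t i - x t i))%:R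
    <= (\sum_(t < T) \sum_(i < n) (x t i - m1 t i))%:R :> R by rewrite ler_nat.
  rewrite !natr_sum.
  by under eq_bigr do rewrite natr_sum; under [X in _ <= X]eq_bigr do rewrite natr_sum.
have K0 : 0 <= K by rewrite /K; lra.
have hKW := ler_wpM2l K0 hWVR.
have hOPT : 0 <= total_cost T f0 f1 c0 c1 m0 m1.
  rewrite /total_cost; apply: sumr_ge0 => t _; rewrite /period_cost.
  have hca : forall i, a <= c0 t i by move=> i; case: (hc t i (ltn_ord t)) => /andP[].
  have hcb : forall i, a <= c1 t i by move=> i; case: (hc t i (ltn_ord t)) => _ /andP[].
  have := @sum_ge0_mul R n a (c0 t) (m0 t) (ltW a0) hca.
  have := @sum_ge0_mul R n a (c1 t) (m1 t) (ltW a0) hcb.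
  set u := \sum_(i < n) _. set v := \sum_(i < n) _.
  set G0 := (if _ then f0 else 0). set G1 := (if _ then f1 else 0).
  have : 0 <= G0 by rewrite /G0; case: ifP.
  have : 0 <= G1 by rewrite /G1; case: ifP.
  clearbody u v G0 G1; lra.
have s2 : 0 <= Num.sqrt 2 :> R by apply: sqrtr_ge0.
have hrho : (1 + 3 * eta) * total_cost T f0 f1 c0 c1 m0 m1
    <= (4 + Num.sqrt 2) * eta * total_cost T f0 f1 c0 c1 m0 m1.
  apply: ler_wpM2r => //; nra.
change (Num.sqrt (M / a)) with eta.
move: hsum hKW hrho hOPT.
set AL := alg_cost _ _ _ _ _ _ _ _ _.
set OP := total_cost _ _ _ _ _ _ _.
set SV := \sum_(t < T) _. set SW := \sum_(t < T) _.
move=> *; lra.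
Qed.
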